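(* Let $(M,f,g)$ be an $(m,n)$-hypermodule over a commutative Krasner $(m,n)$-hyperring $(R,f',g')$ with scalar identity $1$, and let $Q$ be an $n$-ary weakly classical prime subhypermodule of $M$. Then for all $r_1,\dots,r_{n-1}\in R$ and $a\in M$, $$Q_{g(r_1^{n-1},a)}\subseteq F_{g(r_1^{n-1},a)}\cup Q_{g(r_1,1^{(n-2)},a)}\cup\cdots\cup Q_{g(r_{n-1},1^{(n-2)},a)}.$$
   Context: A commutative Krasner $(m,n)$-hyperring with scalar identity $1$ is a triple $(R,f',g')$ where $(R,f')$ is a canonical $m$-ary hypergroup with zero $0$, $(R,g')$ is a commutative $n$-ary semigroup, $g'$ is distributive over $f'$, $0$ is a zero element for $g'$, and $g'(x,1^{(n-1)})=x$. Notation: $x_i^j$ denotes $x_i,\dots,x_j$ and $x^{(k)}$ denotes $x$ repeated $k$ times. An $(m,n)$-hypermodule over $R$ is a triple $(M,f,g)$ with $(M,f)$ a canonical $m$-ary hypergroup with zero $0$ and $g:R^{n-1}\times M\to P^*(M)$ satisfying: $g(r_1^{n-1},f(x_1^m))=f(g(r_1^{n-1},x_1),\dots,g(r_1^{n-1},x_m))$; $g(r_1^{i-1},f'(s_1^m),r_{i+1}^{n-1},x)=f(g(r_1^{i-1},s_1,r_{i+1}^{n-1},x),\dots,g(r_1^{i-1},s_m,r_{i+1}^{n-1},x))$; $g(r_1^{i-1},g'(r_i^{i+n-1}),r_{i+n}^{2n-2},x)=g(r_1^{n-1},g(r_n^{2n-2},x))$; $g(r_1^{i-1},0,r_{i+1}^{n-1},x)=\{0\}$;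 moreover $g(1^{(n-1)},a)=\{a\}$. For subsets, $g(A_1,\dots,A_{n-1},X)$ is the union of $g(r_1^{n-1},x)$ over $r_i\in A_i$, $x\in X$. A subhypermodule is a nonempty $N\subseteq M$ with $(N,f)$ an $m$-ary subhypergroup and $g(R^{(n-1)},N)\subseteq N$. A proper subhypermodule $Q$ is $n$-ary weakly classical prime if for $r_1^{n-1}\in R$, $a\in M$, $0\notin g(r_1^{n-1},a)\subseteq Q$ implies $g(r_i,1^{(n-2)},a)\subseteq Q$ for some $1\le i\le n-1$. For a nonempty $X\subseteq M$ and a subhypermodule $Q$: $Q_X=\{r\in R: g(r,1^{(n-2)},X)\subseteq Q\}$ and $F_X=\{r\in R: r\neq0,\ 0\in g(r,1^{(n-2)},X)\}$. *)

(* Defs.v *)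
From mathcomp Require Import all_boot.
From mathcomp Require Import fingroup perm.


(* Indices are 0-based throughout: a k-tuple is a function 'I_k -> T. *)

Definition tup {T : Type} (k : nat) (s : nat -> T) : 'I_k -> T :=
  fun i => s (nat_of_ord i).

Definition upd {T : Type} {k : nat} (s : 'I_k -> T) (i : nat) (y : T) : 'I_k -> T :=
  fun j => if nat_of_ord j == i then y else s j.

Definition seteq {T : Type} (A B : T -> Prop) : Prop := forall x, A x <-> B x.
Definition subs {T : Type} (A B : T -> Prop) : Prop := forall x, A x -> B x.

Definition hop (T : Type) (m : nat) := ('I_m -> T) -> T -> Prop.

Definition hlift {T : Type} {m : nat} (f : hop T m) (A : 'I_m -> T -> Prop) : T -> Prop :=
  fun x => exists s : 'I_m -> T, (forall i, A i (s i)) /\ f s x.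

(* position-i insertion of a value y into a sequence of length 2m-1,
   replacing the block s_i .. s_(i+m-1) *)
Definition ins {T : Type} (m i : nat) (y : T) (s : nat -> T) : nat -> T :=
  fun k => if k < i then s k else if k == i then y else s (k + m).-1.

(* f(s_0^(i-1), f(s_i^(i+m-1)), s_(i+m)^(2m-2)) *)
Definition assoc_at {T : Type} (m : nat) (f : hop T m) (i : nat) (s : nat -> T) : T -> Prop :=
  fun x => exists y, f (tup m (fun k => s (i + k))) y /\ f (tup m (ins m i y s)) x.

Definition hyper_assoc {T : Type} (m : nat) (f : hop T m) : Prop :=
  forall (s : nat -> T) (i j : nat), i < m -> j < m ->
    seteq (assoc_at m f i s) (assoc_at m f j s).

Definition const_tup {T : Type} (k : nat) (z : T) : 'I_k -> T := fun _ => z.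

Definition pair_tup {T : Type} (m : nat) (z a b : T) : 'I_m -> T :=
  upd (upd (const_tup m z) 0 a) 1 b.

Definition canonical_hypergroup {T : Type} (m : nat) (f : hop T m) (z : T) : Prop :=
  (forall s, exists x, f s x) /\
  hyper_assoc m f /\
  (forall (s : 'I_m -> T) (i : 'I_m) (x : T), exists y, f (upd s i y) x) /\
  (forall (s : 'I_m -> T) (sg : {perm 'I_m}), seteq (f s) (f (fun k => s (sg k)))) /\
  (forall x, seteq (f (upd (const_tup m z) 0 x)) (eq x)) /\
  (forall e, (forall x, seteq (f (upd (const_tup m e) 0 x)) (eq x)) -> e = z) /\
  (forall x, exists! y, f (pair_tup m z x y) z) /\
  (* reversibility: x in f(x_1^m) implies x_i in f(-x_1,..,x,..,-x_m)
     (x at position i; the order of arguments is irrelevant by commutativity) *)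
  (forall (s : 'I_m -> T) (x : T), f s x ->
     forall inv : 'I_m -> T, (forall j, f (pair_tup m z (s j) (inv j)) z) ->
     forall i : 'I_m, f (upd inv i x) (s i)).

Definition ins_op {T : Type} (n i : nat) (g : ('I_n -> T) -> T) (s : nat -> T) : nat -> T :=
  ins n i (g (tup n (fun k => s (i + k)))) s.

Definition commutative_nary_semigroup {T : Type} (n : nat) (g : ('I_n -> T) -> T) : Prop :=
  (forall (s : nat -> T) (i j : nat), i < n -> j < n ->
     g (tup n (ins_op n i g s)) = g (tup n (ins_op n j g s))) /\
  (forall (s : 'I_n -> T) (sg : {perm 'I_n}), g s = g (fun k => s (sg k))).

Definition krasner_hyperring {R : Type} (m n : nat) (f' : hop R m)
    (g' : ('I_n -> R) -> R) (z one : R) : Prop :=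
  [/\ canonical_hypergroup m f' z,
      commutative_nary_semigroup n g',
      forall (a : 'I_n -> R) (i : 'I_n) (x : 'I_m -> R),
        seteq (fun y => exists u, f' x u /\ y = g' (upd a i u))
              (f' (fun k => g' (upd a i (x k)))),
      forall (a : 'I_n -> R) (i : 'I_n), g' (upd a i z) = z &
      forall x, g' (upd (const_tup n one) 0 x) = x].

Definition glift {R M : Type} {k : nat} (g : ('I_k -> R) -> M -> M -> Prop)
    (r : 'I_k -> R) (X : M -> Prop) : M -> Prop :=
  fun y => exists x, X x /\ g r x y.

Definition ins_scal {R : Type} (n : nat) (g' : ('I_n -> R) -> R) (i : nat) (s : nat -> R)
  : 'I_n.-1 -> R := tup n.-1 (ins_op n i g' s).

Definition hypermodule {R M : Type} (m n : nat) (f' : hop R m) (g' : ('I_n -> R) -> R)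
    (zR oneR : R) (f : hop M m) (g : ('I_n.-1 -> R) -> M -> M -> Prop) (zM : M) : Prop :=
  canonical_hypergroup m f zM /\
  (forall r x, exists y, g r x y) /\
  (forall (r : 'I_n.-1 -> R) (x : 'I_m -> M),
     seteq (glift g r (f x)) (hlift f (fun k => g r (x k)))) /\
  (forall (r : 'I_n.-1 -> R) (i : 'I_n.-1) (s : 'I_m -> R) (x : M),
     seteq (fun y => exists u, f' s u /\ g (upd r i u) x y)
           (hlift f (fun k => g (upd r i (s k)) x))) /\
  (* g(r_1^(i-1), g'(r_i^(i+n-1)), r_(i+n)^(2n-2), x) = g(r_1^(n-1), g(r_n^(2n-2), x)),
     0-based indices: s_0 .. s_(2n-3) *)
  (forall (s : nat -> R) (i : nat), i < n.-1 -> forall x : M,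
     seteq (g (ins_scal n g' i s) x)
           (glift g (tup n.-1 s) (g (tup n.-1 (fun k => s (n.-1 + k))) x))) /\
  (forall (r : 'I_n.-1 -> R) (i : 'I_n.-1) (x : M), seteq (g (upd r i zR) x) (eq zM)) /\
  (forall a : M, seteq (g (const_tup n.-1 oneR) a) (eq a)).

Definition subhypermodule {R M : Type} (m n : nat) (f : hop M m)
    (g : ('I_n.-1 -> R) -> M -> M -> Prop) (N : M -> Prop) : Prop :=
  [/\ exists x, N x,
      forall s : 'I_m -> M, (forall i, N (s i)) -> subs (f s) N,
      (* reproduction inside N: (N,f) is an m-ary hypergroup *)
      forall (s : 'I_m -> M) (i : 'I_m) (x : M), (forall j, N (s j)) -> N x ->
        exists y, N y /\ f (upd s i y) x &
      forall (r : 'I_n.-1 -> R) (x : M), N x -> subs (g r x) N].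

Definition scal1 {R : Type} (n : nat) (oneR r : R) : 'I_n.-1 -> R :=
  upd (const_tup n.-1 oneR) 0 r.

Definition weakly_classical_prime {R M : Type} (m n : nat) (oneR : R) (f : hop M m)
    (g : ('I_n.-1 -> R) -> M -> M -> Prop) (zM : M) (Q : M -> Prop) : Prop :=
  [/\ subhypermodule m n f g Q,
      (exists x, ~ Q x) &
      forall (r : 'I_n.-1 -> R) (a : M), ~ g r a zM -> subs (g r a) Q ->
        exists i : 'I_n.-1, subs (g (scal1 n oneR (r i)) a) Q].

Definition Qset {R M : Type} (n : nat) (oneR : R) (g : ('I_n.-1 -> R) -> M -> M -> Prop)
    (Q : M -> Prop) (X : M -> Prop) : R -> Prop :=
  fun r => subs (glift g (scal1 n oneR r) X) Q.

Definition Fset {R M : Type} (n : nat) (zR oneR : R) (g : ('I_n.-1 -> R) -> M -> M -> Prop)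
    (zM : M) (X : M -> Prop) : R -> Prop :=
  fun r => r <> zR /\ glift g (scal1 n oneR r) X zM.

(* Main.v *)
Require Import Defs.
From mathcomp Require Import all_boot.
From mathcomp Require Import fingroup perm.
From mathcomp Require Import zify.
From Stdlib Require Import Classical FunctionalExtensionality.

Theorem mainTheorem9 (R M : Type) (m n : nat)
    (f' : hop R m) (g' : ('I_n -> R) -> R) (zR oneR : R)
    (f : hop M m) (g : ('I_n.-1 -> R) -> M -> M -> Prop) (zM : M)
    (Q : M -> Prop) :
  2 <= m -> 2 <= n ->
  krasner_hyperring m n f' g' zR oneR ->
  hypermodule m n f' g' zR oneR f g zM ->
  weakly_classical_prime m n oneR f g zM Q ->
  forall (r : 'I_n.-1 -> R) (a : M),
    subs (Qset n oneR g Q (g r a))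
         (fun s => Fset n zR oneR g zM (g r a) s \/
                   exists i : 'I_n.-1, Qset n oneR g Q (g (scal1 n oneR (r i)) a) s).
Proof.
move=> hm hn HR HM HQ r a s Hs.
case: HM => [_ [_ [_ [_ [Hassoc [Hzero _]]]]]].
case: HQ => [[[x0 Qx0] _ _ Qg] _ Hprime].
have n1pos : 0 < n.-1 by clear -hn; case: n hn => [|[|n]].
pose i0 : 'I_n.-1 := Ordinal n1pos.
have QzM : Q zM.
  apply: (Qg (upd (const_tup n.-1 oneR) 0 zR) x0 Qx0).
  exact: (proj2 (Hzero (const_tup n.-1 oneR) i0 x0 zM) erefl).
case: (classic (s = zR)) => [-> | snz].
  right; exists i0 => y [x [_ Hy]].
  by rewrite -(proj1 (Hzero (const_tup n.-1 oneR) i0 x y) Hy).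
case: (classic (glift g (scal1 n oneR s) (g r a) zM)) => [H0|H0].
  by left; split.
right.
pose rn (k : nat) : R := if (insub k : option 'I_n.-1) is Some i then r i else oneR.
have rnE : forall i : 'I_n.-1, rn (nat_of_ord i) = r i.
  by move=> i; rewrite /rn valK.
pose seq1 (k : nat) : R := if k < n.-1 then (if k == 0 then s else oneR) else rn (k - n.-1).
have E1 : tup n.-1 seq1 = scal1 n oneR s.
  apply: functional_extensionality => k.
  by rewrite /tup /scal1 /upd /const_tup /seq1 ltn_ord; case: (nat_of_ord k == 0).
have E2 : tup n.-1 (fun k => seq1 (n.-1 + k)) = r.
  apply: functional_extensionality => k.
  by rewrite /tup /seq1 ltnNge leq_addr /= addKn rnE.
have A1 := Hassoc seq1 0 n1pos a.
rewrite E1 E2 in A1.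
pose r' := ins_scal n g' 0 seq1.
have [i Hi] : exists i : 'I_n.-1, subs (g (scal1 n oneR (r' i)) a) Q.
  apply: Hprime.
    by move=> H; apply: H0; apply: (proj1 (A1 zM)).
  by move=> y Hy; apply: Hs; apply: (proj1 (A1 y)).
exists i.
case: (eqVneq (nat_of_ord i) 0) => [ie | inz].
  pose seq2 (k : nat) : R := if k < n.-1 then (if k == 0 then s else oneR)
                             else if k == n.-1 then rn 0 else oneR.
  have E3 : tup n.-1 seq2 = scal1 n oneR s.
    apply: functional_extensionality => k.
    by rewrite /tup /scal1 /upd /const_tup /seq2 ltn_ord; case: (nat_of_ord k == 0).
  have E4 : tup n.-1 (fun k => seq2 (n.-1 + k)) = scal1 n oneR (r i).
    apply: functional_extensionality => k.
    rewrite /tup /seq2 ltnNge leq_addr /=.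
    have -> : (n.-1 + k == n.-1) = (nat_of_ord k == 0) by apply/eqP/eqP; lia.
    rewrite /scal1 /upd /const_tup eq_sym.
    by case: (nat_of_ord k == 0) => //; rewrite -ie rnE.
  have E5 : ins_scal n g' 0 seq2 = scal1 n oneR (r' i).
    apply: functional_extensionality => k.
    rewrite /r' /ins_scal /tup /ins_op /ins /scal1 /upd /const_tup ie !ltn0 /=.
    case: eqP => kz.
      congr g'; apply: functional_extensionality => j.
      rewrite /tup /seq1 /seq2 /= add0n; case hj: (nat_of_ord j < n.-1) => //.
      have hjn : nat_of_ord j = n.-1.
        move: hj (ltn_ord j); lia.
      rewrite hjn.
      by rewrite eqxx subnn.
    rewrite /seq2.
    have -> : ((k + n).-1 < n.-1) = false by lia.
    by have -> : ((k + n).-1 == n.-1) = false by lia.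
  have A2 := Hassoc seq2 0 n1pos a.
  rewrite E3 E4 E5 in A2.
  by move=> y Hy; apply: Hi; apply: (proj2 (A2 y)).
have Er' : r' i = r i.
  rewrite /r' /ins_scal /tup /ins_op /ins ltn0 /= (negbTE inz) /seq1.
  have -> : ((i + n).-1 < n.-1) = false by lia.
  by have -> : (i + n).-1 - n.-1 = nat_of_ord i by lia.
rewrite Er' in Hi.
move=> y [x [Hx Hy]].
exact: (Qg _ x (Hi x Hx) y Hy).
Qed.
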